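(* For real numbers $y,z$ let $h_{y,z}(u):=uy+(1-u)z+2u\ln u+2(1-u)\ln(1-u)+1$ for $u\in(0,1)$, and let $U$ be uniform on $(0,1)$. Then for all real $t$ (with $t\neq 0$), $\left|\mathbf{E}e^{ith_{y,z}(U)}\right|\le 2|t|^{-1/2}$. *)

(* Defs.v *)
From Stdlib Require Import Reals.
From Coquelicot Require Import Coquelicot.
Open Scope R_scope.

Definition h (y z u : R) : R :=
  u * y + (1 - u) * z + 2 * u * ln u + 2 * (1 - u) * ln (1 - u) + 1.

Definition cexpi (s : R) : C := (cos s, sin s).

(* E e^{i t h_{y,z}(U)} for U uniform on (0,1): the integral over [0,1]
   (the endpoints have measure zero). *)
Definition charfun_h (y z t : R) : C :=
  RInt (V := C_R_CompleteNormedModule) (fun u => cexpi (t * h y z u)) 0 1.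

(* Main.v *)
From Stdlib Require Import Reals Lra.
From Coquelicot Require Import Coquelicot.
Require Import Defs.
Open Scope R_scope.

Lemma ln_le_sub1 y : 0 < y -> ln y <= y - 1.
Proof. intros Hy. pose proof (exp_ineq1_le (ln y)). rewrite exp_ln in H; lra. Qed.

Lemma ln_nonpos x : x <= 0 -> ln x = 0.
Proof. intros Hx. unfold ln. destruct (Rlt_dec 0 x) as [h|h]; [exfalso; lra|reflexivity]. Qed.

Lemma xlnx_cont0 : continuity_pt (fun x => x * ln x) 0.
Proof.
  intros eps Heps.
  exists (Rmin 1 ((eps/2*(eps/2)))). split.
  { apply Rmin_pos; [lra|]. apply Rmult_lt_0_compat; lra. }
  intros x [_ Hx]. simpl in Hx |- *. unfold R_dist in *.
  rewrite Rmult_0_l, Rminus_0_r. rewrite Rminus_0_r in Hx.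
  destruct (Rle_dec x 0) as [Hn|Hp].
  { rewrite ln_nonpos by lra. rewrite Rmult_0_r, Rabs_R0. lra. }
  apply Rnot_le_lt in Hp. assert (Hx0 : 0 < x) by lra.
  rewrite Rabs_right in Hx by lra.
  assert (Hx1 : x < 1) by (pose proof (Rmin_l 1 ((eps/2*(eps/2)))); lra).
  assert (Hx2 : x < (eps/2*(eps/2))) by (pose proof (Rmin_r 1 ((eps/2*(eps/2)))); lra).
  set (s := sqrt x).
  assert (Hs0 : 0 < s) by (apply sqrt_lt_R0; lra).
  assert (Hss : s * s = x) by (apply sqrt_sqrt; lra).
  assert (Hs1 : s < 1) by nra.
  assert (Hse : s < eps/2) by nra.
  assert (Hl : ln x = 2 * ln s) by (rewrite <- Hss, ln_mult by lra; ring).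
  assert (Hls : ln s <= 0).
  { rewrite <- ln_1. apply ln_le; lra. }
  assert (Hinv : ln (/ s) <= / s - 1) by (apply ln_le_sub1; apply Rinv_0_lt_compat; lra).
  rewrite ln_Rinv in Hinv by lra.
  assert (Hsi : s * / s = 1) by (field; lra).
  rewrite Hl, <- Hss.
  rewrite Rabs_left1 by nra.
  nra.
Qed.

Lemma xlnx_cont x : 0 <= x -> continuity_pt (fun x => x * ln x) x.
Proof.
  intros Hx. destruct (Req_dec x 0) as [->|Hne]; [apply xlnx_cont0|].
  apply derivable_continuous_pt.
  exists (1 * ln x + x * / x).
  apply derivable_pt_lim_mult; [apply derivable_pt_lim_id|apply derivable_pt_lim_ln; lra].
Qed.
Lemma L0 (f H dH : R -> R) (a b : R) :
  a <= b ->
  (forall u, a <= u <= b -> derivable_pt_lim H u (dH u)) ->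
  (forall u, a <= u <= b -> continuity_pt dH u) ->
  (forall u, a < u < b -> f u <= dH u) ->
  ex_RInt f a b ->
  RInt f a b <= H b - H a.
Proof.
  intros hab hd hc hle hf.
  assert (HI : is_RInt dH a b (minus (H b) (H a))).
  { apply (@is_RInt_derive R_CompleteNormedModule).
    - intros x Hx. rewrite Rmin_left, Rmax_right in Hx by lra. apply is_derive_Reals. auto.
    - intros x Hx. rewrite Rmin_left, Rmax_right in Hx by lra.
      apply continuity_pt_filterlim. auto. }
  replace (H b - H a) with (RInt dH a b).
  - apply RInt_le; auto. eexists; eauto.
  - apply is_RInt_unique. exact HI.
Qed.

Lemma sq_abs X R : X^2 <= R^2 -> 0 <= R -> Rabs X <= R.
Proof. intros H1 H2. apply Rabs_le. split; nra. Qed.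

Lemma W_bound A B R x : A^2 + B^2 <= R^2 -> 0 <= R ->
  Rabs (A * sin x - B * cos x) <= R /\ Rabs (A * cos x + B * sin x) <= R.
Proof.
  intros H0 HR. pose proof (sin2_cos2 x) as Hsc. unfold Rsqr in Hsc.
  assert (Id : (A * sin x - B * cos x)^2 + (A * cos x + B * sin x)^2 = (A^2+B^2) * (sin x * sin x + cos x * cos x)) by ring.
  rewrite Hsc, Rmult_1_r in Id.
  pose proof (pow2_ge_0 (A * sin x - B * cos x)). pose proof (pow2_ge_0 (A * cos x + B * sin x)).
  split; apply sq_abs; auto; lra.
Qed.

Lemma dH_deriv (A B c: R) (phi p1 p2 : R -> R) u :
  derivable_pt_lim phi u (p1 u) -> derivable_pt_lim p1 u (p2 u) -> p1 u <> 0 ->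
  derivable_pt_lim (fun u => (A * sin (phi u) - B * cos (phi u) + c) / p1 u) u
     (A * cos (phi u) + B * sin (phi u) - (A * sin (phi u) - B * cos (phi u) + c) * p2 u / (p1 u * p1 u)).
Proof.
  intros H1 H2 H3. apply is_derive_Reals.
  apply is_derive_Reals in H1. apply is_derive_Reals in H2.
  auto_derive.
  - repeat split; try (eexists; eassumption); auto.
  - replace (Derive (fun x => phi x) u) with (p1 u) by (symmetry; apply is_derive_unique; auto).
    replace (Derive (fun x => p1 x) u) with (p2 u) by (symmetry; apply is_derive_unique; auto).
    field; auto.
Qed.

Lemma dH_cont (A B c: R) (phi p1 p2 : R -> R) u :
  continuity_pt phi u -> continuity_pt p1 u -> continuity_pt p2 u -> p1 u <> 0 ->
  continuity_pt (fun u => A * cos (phi u) + B * sin (phi u) - (A * sin (phi u) - B * cos (phi u) + c) * p2 u / (p1 u * p1 u)) u.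
Proof.
  intros H1 H2 H3 H4.
  assert (Hc: continuity_pt (fun u => cos (phi u)) u) by (apply (continuity_pt_comp phi cos); [auto| apply continuity_cos]).
  assert (Hs: continuity_pt (fun u => sin (phi u)) u) by (apply (continuity_pt_comp phi sin); [auto| apply continuity_sin]).
  assert (Hk: forall k, continuity_pt (fun _ => k) u) by (intros; apply continuity_pt_const; intros ? ?; reflexivity).
  apply continuity_pt_minus.
  apply continuity_pt_plus; apply continuity_pt_mult; auto.
  apply continuity_pt_div.
  apply continuity_pt_mult; auto.
  apply continuity_pt_plus; auto.
  apply continuity_pt_minus; apply continuity_pt_mult; auto.
  apply continuity_pt_mult; auto.
  apply Rmult_integral_contrapositive; auto.
Qed.

Lemma psi_cont (A B : R) (phi : R -> R) u :
  continuity_pt phi u -> continuity_pt (fun u => A * cos (phi u) + B * sin (phi u)) u.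
Proof.
  intros H1.
  assert (Hc: continuity_pt (fun u => cos (phi u)) u) by (apply (continuity_pt_comp phi cos); [auto| apply continuity_cos]).
  assert (Hs: continuity_pt (fun u => sin (phi u)) u) by (apply (continuity_pt_comp phi sin); [auto| apply continuity_sin]).
  assert (Hk: forall k, continuity_pt (fun _ => k) u) by (intros; apply continuity_pt_const; intros ? ?; reflexivity).
  apply continuity_pt_plus; apply continuity_pt_mult; auto.
Qed.

Lemma psi_int (A B : R) (phi : R -> R) a b : a <= b ->
  (forall u, a <= u <= b -> continuity_pt phi u) ->
  ex_RInt (fun u => A * cos (phi u) + B * sin (phi u)) a b.
Proof.
  intros hab hc. apply (@ex_RInt_continuous R_CompleteNormedModule).
  intros z Hz. rewrite Rmin_left, Rmax_right in Hz by lra.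
  apply continuity_pt_filterlim. apply psi_cont. auto.
Qed.

Lemma L1 (A B M : R) (phi p1 p2 : R -> R) (a b D : R) :
  a <= b -> 0 < D -> A^2 + B^2 <= M^2 -> 0 <= M ->
  (forall u, a <= u <= b -> derivable_pt_lim phi u (p1 u)) ->
  (forall u, a <= u <= b -> derivable_pt_lim p1 u (p2 u)) ->
  (forall u, a <= u <= b -> continuity_pt p2 u) ->
  (forall u, a <= u <= b -> D <= p1 u) ->
  (forall u, a <= u <= b -> 0 <= p2 u) \/ (forall u, a <= u <= b -> p2 u <= 0) ->
  RInt (fun u => A * cos (phi u) + B * sin (phi u)) a b <= 2 * M / D.
Proof.
  intros hab hD hAB hR d1 d2 c2 hp1 hsgn.
  assert (c0 : forall u, a <= u <= b -> continuity_pt phi u)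
    by (intros u Hu; apply derivable_continuous_pt; exact (exist _ (p1 u) (d1 u Hu))).
  assert (c1 : forall u, a <= u <= b -> continuity_pt p1 u)
    by (intros u Hu; apply derivable_continuous_pt; exact (exist _ (p2 u) (d2 u Hu))).
  assert (nz : forall u, a <= u <= b -> p1 u <> 0) by (intros u Hu; specialize (hp1 u Hu); lra).
  assert (ha : a <= a <= b) by lra. assert (hb : a <= b <= b) by lra.
  pose proof (W_bound A B M (phi a) hAB hR) as [Wa _].
  pose proof (W_bound A B M (phi b) hAB hR) as [Wb _].
  apply Rabs_le_between in Wa. apply Rabs_le_between in Wb.
  pose proof (hp1 a ha) as Da. pose proof (hp1 b hb) as Db.
  assert (ia : / p1 a <= / D) by (apply Rinv_le_contravar; lra).
  assert (ib : / p1 b <= / D) by (apply Rinv_le_contravar; lra).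
  assert (ia0 : 0 < / p1 a) by (apply Rinv_0_lt_compat; lra).
  assert (ib0 : 0 < / p1 b) by (apply Rinv_0_lt_compat; lra).
  destruct hsgn as [hs|hs]; [set (c := - M)|set (c := M)];
  (eapply Rle_trans;
   [apply (L0 _ (fun u => (A * sin (phi u) - B * cos (phi u) + c) / p1 u)
    (fun u => A * cos (phi u) + B * sin (phi u) - (A * sin (phi u) - B * cos (phi u) + c) * p2 u / (p1 u * p1 u)))|]);
  [ lra | intros u Hu; apply dH_deriv; auto | intros u Hu; apply dH_cont; auto
  | | apply psi_int; auto | 
  | lra | intros u Hu; apply dH_deriv; auto | intros u Hu; apply dH_cont; auto
  | | apply psi_int; auto | ].
  - intros u Hu. assert (Hu' : a <= u <= b) by lra.
    pose proof (W_bound A B M (phi u) hAB hR) as [Wu _]. apply Rabs_le_between in Wu.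
    assert (0 <= (M - (A * sin (phi u) - B * cos (phi u))) * p2 u * / (p1 u * p1 u)).
    { apply Rmult_le_pos; [apply Rmult_le_pos; [lra| apply hs; auto]|].
      apply Rlt_le, Rinv_0_lt_compat. specialize (hp1 u Hu'). nra. }
    unfold c, Rdiv. lra.
  - unfold c, Rdiv. nra.
  - intros u Hu. assert (Hu' : a <= u <= b) by lra.
    pose proof (W_bound A B M (phi u) hAB hR) as [Wu _]. apply Rabs_le_between in Wu.
    assert (0 <= (A * sin (phi u) - B * cos (phi u) + M) * (- p2 u) * / (p1 u * p1 u)).
    { apply Rmult_le_pos; [apply Rmult_le_pos; [lra| specialize (hs u Hu'); lra]|].
      apply Rlt_le, Rinv_0_lt_compat. specialize (hp1 u Hu'). nra. }
    unfold c, Rdiv. lra.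
  - unfold c, Rdiv. nra.
Qed.
Definition h1 (y z u : R) : R := y - z + 2 * ln u - 2 * ln (1 - u).
Definition h2 (u : R) : R := 2 / u + 2 / (1 - u).

Lemma h_deriv y z u : 0 < u < 1 -> derivable_pt_lim (h y z) u (h1 y z u).
Proof.
  intros Hu. apply is_derive_Reals. unfold h, h1. auto_derive.
  - repeat split; lra.
  - replace (1 + - u) with (1 - u) by ring. field. lra.
Qed.

Lemma h1_deriv y z u : 0 < u < 1 -> derivable_pt_lim (h1 y z) u (h2 u).
Proof.
  intros Hu. apply is_derive_Reals. unfold h1, h2. auto_derive.
  - repeat split; lra.
  - try replace (1 + - u) with (1 - u) by ring. field. lra.
Qed.

Lemma h2_cont u : 0 < u < 1 -> continuity_pt h2 u.
Proof.
  intros Hu. apply derivable_continuous_pt.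
  exists (- 2 / (u*u) + 2 / ((1-u)*(1-u))). apply is_derive_Reals. unfold h2. auto_derive.
  - repeat split; lra.
  - try replace (1 + - u) with (1 - u) by ring. field. lra.
Qed.

Lemma h2_ge8 u : 0 < u < 1 -> 8 <= h2 u.
Proof.
  intros Hu. unfold h2.
  replace (2 / u + 2 / (1 - u)) with (2 / (u * (1 - u))) by (field; lra).
  apply (Rmult_le_reg_r (u * (1 - u))); [nra|].
  unfold Rdiv. rewrite Rmult_assoc, Rinv_l by nra. pose proof (pow2_ge_0 (2*u-1)). nra.
Qed.

Definition mid (y z : R) : R := / (1 + exp ((y - z) / 2)).

Lemma mid_bounds y z : 0 < mid y z < 1.
Proof.
  unfold mid. pose proof (exp_pos ((y - z) / 2)). split.
  - apply Rinv_0_lt_compat; lra.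
  - rewrite <- Rinv_1. apply Rinv_lt_contravar; lra.
Qed.

Lemma h1_mid y z : h1 y z (mid y z) = 0.
Proof.
  unfold h1, mid. set (e := exp ((y - z) / 2)).
  assert (He : 0 < e) by apply exp_pos.
  replace (1 - / (1 + e)) with (e * / (1 + e)) by (field; lra).
  rewrite ln_mult by (try apply Rinv_0_lt_compat; lra).
  unfold e. rewrite ln_exp. field.
Qed.

Lemma h1_mvt y z u : 0 < u < 1 -> 8 * (u - mid y z) * (u - mid y z) <= h1 y z u * (u - mid y z).
Proof.
  intros Hu. pose proof (mid_bounds y z) as Hm. set (m := mid y z) in *.
  destruct (Rtotal_order u m) as [Hlt|[Heq|Hgt]].
  - destruct (MVT_cor2 (h1 y z) h2 u m Hlt) as [c [Hc1 Hc2]].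
    { intros c Hc. apply h1_deriv. lra. }
    unfold m in Hc1. rewrite h1_mid in Hc1. fold m in Hc1.
    pose proof (h2_ge8 c ltac:(lra)).
    assert (E : h1 y z u = h2 c * (u - m)) by lra. rewrite E.
    pose proof (Rmult_le_compat_r ((u - m) * (u - m)) 8 (h2 c) ltac:(nra) ltac:(lra)). nra.
  - subst. rewrite Rminus_diag. lra.
  - destruct (MVT_cor2 (h1 y z) h2 m u Hgt) as [c [Hc1 Hc2]].
    { intros c Hc. apply h1_deriv. lra. }
    unfold m in Hc1. rewrite h1_mid in Hc1. fold m in Hc1.
    pose proof (h2_ge8 c ltac:(lra)).
    assert (E : h1 y z u = h2 c * (u - m)) by lra. rewrite E.
    pose proof (Rmult_le_compat_r ((u - m) * (u - m)) 8 (h2 c) ltac:(nra) ltac:(lra)). nra.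
Qed.

Lemma h_cont y z u : 0 <= u <= 1 -> continuity_pt (h y z) u.
Proof.
  intros Hu.
  apply continuity_pt_ext with (f := fun u => u*y + (1-u)*z + 2*(u*ln u) + 2*((1-u)*ln(1-u)) + 1).
  { intros x. unfold h. ring. }
  assert (Hk: forall k, continuity_pt (fun _ => k) u) by (intros; apply continuity_pt_const; intros ? ?; reflexivity).
  assert (Hid: continuity_pt (fun x => x) u) by apply continuity_pt_id.
  assert (H1u: continuity_pt (fun x => 1 - x) u) by (apply continuity_pt_minus; auto).
  assert (Hl1 : continuity_pt (fun x => x * ln x) u) by (apply xlnx_cont; lra).
  assert (Hl2 : continuity_pt (fun x => (1 - x) * ln (1 - x)) u).
  { apply (continuity_pt_comp (fun x => 1 - x) (fun x => x * ln x)); auto. apply xlnx_cont; lra. }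
  apply continuity_pt_plus; auto.
  apply continuity_pt_plus; [|apply continuity_pt_mult; auto].
  apply continuity_pt_plus; [|apply continuity_pt_mult; auto].
  apply continuity_pt_plus; apply continuity_pt_mult; auto.
Qed.

Lemma th_cont y z s u : 0 <= u <= 1 -> continuity_pt (fun u => s * h y z u) u.
Proof.
  intros Hu. apply continuity_pt_mult; [apply continuity_pt_const; intros ? ?; reflexivity| apply h_cont; auto].
Qed.

Lemma Lconst (f : R -> R) p q M : p <= q -> ex_RInt f p q ->
  (forall u, p < u < q -> f u <= M) -> RInt f p q <= M * (q - p).
Proof.
  intros hpq hf hb.
  eapply Rle_trans; [apply (RInt_le f (fun _ => M)); auto; apply ex_RInt_const|].
  rewrite RInt_const. right. cbv [scal]. simpl. unfold mult. simpl. ring.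
Qed.

Lemma dsc (f : R -> R) k u l : derivable_pt_lim f u l -> derivable_pt_lim (fun x => k * f x) u (k * l).
Proof. intros H. exact (derivable_pt_lim_scal f k u l H). Qed.

Lemma dsco (f : R -> R) k u l : derivable_pt_lim f u l -> derivable_pt_lim (fun x => - (k * f x)) u (- (k * l)).
Proof. intros H. exact (derivable_pt_lim_opp _ u _ (dsc f k u l H)). Qed.

Lemma csc (f : R -> R) k u : continuity_pt f u -> continuity_pt (fun x => k * f x) u.
Proof. intros H. exact (continuity_pt_scal f k u H). Qed.

Lemma csco (f : R -> R) k u : continuity_pt f u -> continuity_pt (fun x => - (k * f x)) u.
Proof. intros H. exact (continuity_pt_opp _ u (csc f k u H)). Qed.

Lemma Main A B M s y z : 0 < s -> A^2 + B^2 <= M^2 -> 0 <= M ->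
  RInt (fun u => A * cos (s * h y z u) + B * sin (s * h y z u)) 0 1 <= M * (2 / sqrt s).
Proof.
  intros hs hAB hM.
  set (f := fun u => A * cos (s * h y z u) + B * sin (s * h y z u)).
  pose proof (mid_bounds y z) as Hm. set (m := mid y z) in *.
  assert (hsq : 0 < sqrt s) by (apply sqrt_lt_R0; lra).
  assert (Hss : s = sqrt s * sqrt s) by (rewrite sqrt_sqrt; lra).
  set (sq := sqrt s) in *. clearbody sq.
  set (r := / (2 * sq)).
  assert (hr : 0 < r) by (apply Rinv_0_lt_compat; lra).
  assert (fb : forall u, f u <= M).
  { intros u. pose proof (W_bound A B M (s * h y z u) hAB hM) as [_ Hb].
    apply Rabs_le_between in Hb. unfold f. lra. }
  assert (fint : forall p q, 0 <= p -> p <= q -> q <= 1 -> ex_RInt f p q).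
  { intros p q H1 H2 H3. apply psi_int; auto. intros u Hu. apply th_cont. lra. }
  assert (X : 2 * M / (8 * s * r) = M / (2 * sq)) by (unfold r; rewrite Hss; field; lra).
  assert (key : forall eps, 0 < eps -> eps < m -> eps < 1 - m ->
            RInt f 0 1 <= M * (2 / sq) + 2 * M * eps).
  { intros eps he1 he2 he3.
    set (a1 := Rmax eps (m - r)). set (b1 := Rmin (1 - eps) (m + r)).
    assert (Ha1 : eps <= a1) by apply Rmax_l.
    assert (Ha2 : m - r <= a1) by apply Rmax_r.
    assert (Hb1 : b1 <= 1 - eps) by apply Rmin_l.
    assert (Hb2 : b1 <= m + r) by apply Rmin_r.
    assert (Hab : a1 <= b1) by (apply Rmax_lub; apply Rmin_glb; lra).
    assert (Ha3 : a1 <= m) by (apply Rmax_lub; lra).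
    assert (Hb3 : m <= b1) by (apply Rmin_glb; lra).
    rewrite <- (RInt_Chasles f 0 eps 1) by (apply fint; lra).
    rewrite <- (RInt_Chasles f eps a1 1) by (apply fint; lra).
    rewrite <- (RInt_Chasles f a1 b1 1) by (apply fint; lra).
    rewrite <- (RInt_Chasles f b1 (1 - eps) 1) by (apply fint; lra).
    cbv [plus]. simpl.
    assert (P1 : RInt f 0 eps <= M * (eps - 0)) by (apply Lconst; [lra|apply fint; lra|auto]).
    assert (P5 : RInt f (1 - eps) 1 <= M * (1 - (1 - eps))) by (apply Lconst; [lra|apply fint; lra|auto]).
    assert (P3 : RInt f a1 b1 <= M * (b1 - a1)) by (apply Lconst; [lra|apply fint; lra|auto]).
    assert (P2 : RInt f eps a1 <= 2 * M / (8 * s * r)).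
    { destruct (Rle_dec (m - r) eps) as [Hle|Hgt].
      - replace a1 with eps by (unfold a1; rewrite Rmax_left; lra).
        rewrite RInt_point. cbv [zero]. simpl.
        unfold Rdiv. apply Rmult_le_pos; [lra|]. apply Rlt_le, Rinv_0_lt_compat.
        apply Rmult_lt_0_compat; lra.
      - apply Rnot_le_lt in Hgt.
        assert (Ea : a1 = m - r) by (unfold a1; rewrite Rmax_right; lra).
        assert (Eg : RInt f eps a1 = RInt (fun u => A * cos (- (s * h y z u)) + (- B) * sin (- (s * h y z u))) eps a1).
        { apply RInt_ext. intros x _. unfold f. rewrite cos_neg, sin_neg. rewrite Rmult_opp_opp. reflexivity. }
        rewrite Eg.
        apply (L1 A (- B) M (fun u => - (s * h y z u)) (fun u => - (s * h1 y z u)) (fun u => - (s * h2 u))).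
        + lra.
        + apply Rmult_lt_0_compat; lra.
        + replace ((- B)^2) with (B^2) by ring. exact hAB.
        + exact hM.
        + intros u Hu. apply dsco. apply h_deriv. lra.
        + intros u Hu. apply dsco. apply h1_deriv. lra.
        + intros u Hu. apply csco. apply h2_cont. lra.
        + intros u Hu. pose proof (h1_mvt y z u ltac:(lra)) as Hmv. fold m in Hmv.
          assert (Hh : h1 y z u <= 8 * (u - m)) by nra.
          nra.
        + right. intros u Hu. pose proof (h2_ge8 u ltac:(lra)). nra. }
    assert (P4 : RInt f b1 (1 - eps) <= 2 * M / (8 * s * r)).
    { destruct (Rle_dec (1 - eps) (m + r)) as [Hle|Hgt].
      - replace b1 with (1 - eps) by (unfold b1; rewrite Rmin_left; lra).
        rewrite RInt_point. cbv [zero]. simpl.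
        unfold Rdiv. apply Rmult_le_pos; [lra|]. apply Rlt_le, Rinv_0_lt_compat.
        apply Rmult_lt_0_compat; lra.
      - apply Rnot_le_lt in Hgt.
        assert (Eb : b1 = m + r) by (unfold b1; rewrite Rmin_right; lra).
        apply (L1 A B M (fun u => s * h y z u) (fun u => s * h1 y z u) (fun u => s * h2 u)).
        + lra.
        + apply Rmult_lt_0_compat; lra.
        + exact hAB.
        + exact hM.
        + intros u Hu. apply dsc. apply h_deriv. lra.
        + intros u Hu. apply dsc. apply h1_deriv. lra.
        + intros u Hu. apply csc. apply h2_cont. lra.
        + intros u Hu. pose proof (h1_mvt y z u ltac:(lra)) as Hmv. fold m in Hmv.
          assert (Hh : 8 * (u - m) <= h1 y z u) by nra.
          nra.
        + left. intros u Hu. pose proof (h2_ge8 u ltac:(lra)). nra. }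
    rewrite X in P2, P4.
    assert (E2 : M * (2 / sq) = M / (2 * sq) + M / (2 * sq) + M * (2 * r)) by (unfold r; field; lra).
    rewrite E2. nra. }
  apply Rle_plus_epsilon. intros e he.
  set (e0 := Rmin (Rmin (m/2) ((1 - m)/2)) (e / (2 * M + 1))).
  assert (He0 : 0 < e0).
  { apply Rmin_pos; [apply Rmin_pos; lra|]. apply Rdiv_lt_0_compat; lra. }
  assert (He1 : e0 <= Rmin (m/2) ((1 - m)/2)) by apply Rmin_l.
  assert (He2 : e0 <= e / (2 * M + 1)) by apply Rmin_r.
  pose proof (Rmin_l (m/2) ((1 - m)/2)). pose proof (Rmin_r (m/2) ((1 - m)/2)).
  assert (He3 : e0 * (2 * M + 1) <= e).
  { apply (Rmult_le_compat_r (2 * M + 1)) in He2; [|lra].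
    unfold Rdiv in He2. rewrite Rmult_assoc, Rinv_l in He2 by lra. lra. }
  specialize (key e0 He0 ltac:(lra) ltac:(lra)).
  assert (2 * M * e0 <= e) by nra. lra.
Qed.

Theorem lemma2p3 (y z t : R) (ht : t <> 0) :
  Cmod (charfun_h y z t) <= 2 * / sqrt (Rabs t).
Proof.
  set (c := fun u => cos (t * h y z u)).
  set (sn := fun u => sin (t * h y z u)).
  assert (Hc : ex_RInt c 0 1).
  { apply (@ex_RInt_continuous R_CompleteNormedModule). intros u Hu.
    rewrite Rmin_left, Rmax_right in Hu by lra.
    apply continuity_pt_filterlim. unfold c.
    apply (continuity_pt_comp (fun u => t * h y z u) cos); [apply th_cont; auto|apply continuity_cos]. }
  assert (Hs : ex_RInt sn 0 1).
  { apply (@ex_RInt_continuous R_CompleteNormedModule). intros u Hu.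
    rewrite Rmin_left, Rmax_right in Hu by lra.
    apply continuity_pt_filterlim. unfold sn.
    apply (continuity_pt_comp (fun u => t * h y z u) sin); [apply th_cont; auto|apply continuity_sin]. }
  set (X := RInt c 0 1). set (Y := RInt sn 0 1).
  assert (HI : @is_RInt C_R_NormedModule (fun u => cexpi (t * h y z u)) 0 1 (X, Y)).
  { exact (@is_RInt_fct_extend_pair R_NormedModule R_NormedModule (fun u => cexpi (t * h y z u)) 0 1 X Y
            (RInt_correct _ _ _ Hc) (RInt_correct _ _ _ Hs)). }
  assert (EI : charfun_h y z t = (X, Y)).
  { unfold charfun_h. apply (@is_RInt_unique C_R_CompleteNormedModule). exact HI. }
  rewrite EI. unfold Cmod. simpl fst. simpl snd.
  set (M := sqrt (X ^ 2 + Y ^ 2)).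
  assert (HM0 : 0 <= M) by apply sqrt_pos.
  assert (HM2 : M ^ 2 = X ^ 2 + Y ^ 2).
  { unfold M. apply pow2_sqrt. pose proof (pow2_ge_0 X). pose proof (pow2_ge_0 Y). lra. }
  assert (L : RInt (fun u => X * c u + Y * sn u) 0 1 = X * X + Y * Y).
  { apply is_RInt_unique.
    apply (@is_RInt_plus R_NormedModule (fun u => X * c u) (fun u => Y * sn u) 0 1 (X * X) (Y * Y));
    apply (@is_RInt_scal R_NormedModule); [exact (RInt_correct _ _ _ Hc) | exact (RInt_correct _ _ _ Hs)]. }
  assert (hAt : 0 < Rabs t) by (apply Rabs_pos_lt; auto).
  assert (Kb : RInt (fun u => X * c u + Y * sn u) 0 1 <= M * (2 / sqrt (Rabs t))).
  { destruct (Rlt_dec 0 t) as [tp|tn].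
    - rewrite Rabs_right by lra.
      apply (Main X Y M t y z); auto. rewrite HM2. lra.
    - assert (tn' : t < 0) by lra. rewrite Rabs_left by lra.
      assert (E : RInt (fun u => X * c u + Y * sn u) 0 1 =
                  RInt (fun u => X * cos (- t * h y z u) + (- Y) * sin (- t * h y z u)) 0 1).
      { apply RInt_ext. intros x _. unfold c, sn.
        rewrite Ropp_mult_distr_l_reverse, cos_neg, sin_neg, Rmult_opp_opp. reflexivity. }
      rewrite E. apply (Main X (- Y) M (- t) y z); auto; [lra|]. rewrite HM2. right. simpl. ring. }
  rewrite L in Kb.
  assert (hsq : 0 < sqrt (Rabs t)) by (apply sqrt_lt_R0; lra).
  assert (hK : 0 < 2 / sqrt (Rabs t)) by (apply Rdiv_lt_0_compat; lra).
  fold M. unfold Rdiv in *.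
  destruct (Req_dec M 0) as [H0|H0].
  - rewrite H0. apply Rlt_le. apply Rmult_lt_0_compat; [lra|]. apply Rinv_0_lt_compat; lra.
  - assert (M * M <= M * (2 * / sqrt (Rabs t))) by (simpl in HM2; nra).
    nra.
Qed.
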